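(* Let $R\subseteq\mathbb{C}$ be a subset such that $M:=\inf\{|x|: x\in R\setminus\{0\}\}>0$. Let $\mathcal{F}=(c_{i,j})$ be a frieze pattern over $R\setminus\{0\}$ of height $n\in\mathbb{N}$. Then every entry $c_{i,i+2}$ ($i\in\mathbb{Z}$) of its quiddity cycle satisfies $$|c_{i,i+2}|\le\frac{(n-1)+2M}{M^2}.$$
   Context: A frieze pattern of height $n$ over $S\subseteq\mathbb{C}$ is a family $(c_{i,j})_{i\in\mathbb{Z},\ i\le j\le i+n+3}$ of complex numbers such that: - $c_{i,i}=c_{i,i+n+3}=0$ and $c_{i,i+1}=c_{i,i+n+2}=1$; - $c_{i,j}\in S$ for $i+2\le j\le i+n+1$; - every adjacent $2\times2$ determinant $c_{i,j}c_{i+1,j+1}-c_{i,j+1}c_{i+1,j}$ (all entries defined) equals $1$. ''Over $R\setminus\{0\}$'' means all entries $c_{i,j}$ with $i+2\le j\le i+n+1$ are nonzero elements of $R$. The quiddity cycle of the pattern consists of the entries $c_{i,i+2}$ of its first nontrivial diagonal. *)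

(* Defs.v *)
(* Complex numbers are modelled by an arbitrary
   numClosedFieldType C. *)
From HB Require Import structures.
From mathcomp Require Import all_boot all_order all_algebra.
Set Implicit Arguments. Unset Strict Implicit. Unset Printing Implicit Defensive.
Import Order.TTheory GRing.Theory Num.Theory.
Local Open Scope ring_scope.

(* A frieze pattern of height n over S: the family c i j is only
   meaningful for i <= j <= i + n + 3; values outside are unconstrained. *)
Definition frieze_pattern (C : numClosedFieldType) (S : C -> Prop) (n : nat)
    (c : int -> int -> C) : Prop :=
  (forall i : int,
     c i i = 0 /\ c i (i + n%:Z + 3) = 0 /\
     c i (i + 1) = 1 /\ c i (i + n%:Z + 2) = 1) /\
  (forall i j : int, i + 2 <= j -> j <= i + n%:Z + 1 -> S (c i j)) /\
  (forall i j : int, i + 1 <= j -> j + 1 <= i + n%:Z + 3 ->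
     c i j * c (i + 1) (j + 1) - c i (j + 1) * c (i + 1) j = 1).

Definition nonzero_in (C : numClosedFieldType) (R : {pred C}) : C -> Prop :=
  fun x => x \in R /\ x != 0.

Definition is_inf_abs (C : numClosedFieldType) (R : {pred C}) (M : C) : Prop :=
  (forall x, x \in R -> x != 0 -> M <= `|x|) /\
  (forall M', (forall x, x \in R -> x != 0 -> M' <= `|x|) -> M' <= M).

(* Main.v *)
Require Import Defs.
From HB Require Import structures.
From mathcomp Require Import all_boot all_order all_algebra.
From mathcomp Require Import ring zify.
Import Order.TTheory GRing.Theory Num.Theory.
Local Open Scope ring_scope.

Lemma inv_bound (C : numClosedFieldType) (a b p q : C) :
  0 < p -> 0 < q -> p <= `|a| -> q <= `|b| -> `|1 / (a * b)| <= 1 / (p * q).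
Proof.
move=> p0 q0 pa qb.
have a0 : 0 < `|a| by apply: lt_le_trans pa.
have b0 : 0 < `|b| by apply: lt_le_trans qb.
rewrite !div1r normfV normrM lef_pV2 ?posrE ?mulr_gt0 //.
by apply: ler_pM => //; apply: ltW.
Qed.

Lemma PoszS (k : nat) : (k.+1)%:Z = k%:Z + 1.
Proof. by rewrite -addn1 PoszD. Qed.

Theorem theorem3p6 (C : numClosedFieldType) (R : {pred C}) (M : C)
    (hinf : is_inf_abs R M) (hM : 0 < M)
    (n : nat) (hn : (0 < n)%N) (c : int -> int -> C)
    (hF : frieze_pattern (nonzero_in R) n c) :
  forall i : int, `|c i (i + 2)| <= (n%:R - 1 + 2 * M) / M ^+ 2.
Proof.
move=> i.
case: hF => [hb [hS hD]].
set d := fun k : nat => c (i + 1) (i + 2 + k%:Z).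
set e := fun k : nat => c i (i + 2 + k%:Z).
have hd0 : d 0%N = 1.
  rewrite /d addr0.
  have -> : i + 2 = i + 1 + 1 by rewrite -addrA.
  by case: (hb (i + 1)) => _ [_ [-> _]].
have hdn : d n.+1 = 1.
  rewrite /d.
  have -> : i + 2 + (n.+1)%:Z = i + 1 + n%:Z + 2.
    by rewrite PoszS; ring.
  by case: (hb (i + 1)) => _ [_ [_ ->]].
have hen : e n.+1 = 0.
  rewrite /e.
  have -> : i + 2 + (n.+1)%:Z = i + n%:Z + 3.
    by rewrite PoszS; ring.
  by case: (hb i) => _ [-> _].
have hdS : forall k, (1 <= k)%N -> (k <= n)%N -> M <= `|d k| /\ d k != 0.
  move=> k k1 kn.
  have [Rx nz] : nonzero_in R (d k).
    apply: hS; lia.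
  by split => //; apply: hinf.1.
have hdnz : forall k, (k <= n.+1)%N -> d k != 0.
  move=> k kn; case: k kn => [|k] kn; first by rewrite hd0 oner_neq0.
  case: (ltngtP k.+1 n.+1) kn => // [kl|->] _; last by rewrite hdn oner_neq0.
  by case: (hdS k.+1 isT kl).
have hdiam : forall k, (k <= n)%N -> e k * d k.+1 - e k.+1 * d k = 1.
  move=> k kn.
  have := hD i (i + 2 + k%:Z).
  have -> : i + 2 + k%:Z + 1 = i + 2 + (k.+1)%:Z by rewrite PoszS; ring.
  move=> -> //; lia.
pose t := fun k : nat => 1 / (d k * d k.+1).
have hsum : forall m, (m <= n.+1)%N ->
    e 0%N / d 0%N = e m / d m + \sum_(0 <= k < m) t k.
  elim => [|m IH] mn; first by rewrite big_geq // addr0.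
  rewrite IH ?(ltnW mn) // big_nat_recr //=.
  have h1 := hdnz m (ltnW mn); have h2 := hdnz m.+1 mn.
  suff -> : e m / d m = e m.+1 / d m.+1 + t m by ring.
  rewrite /t -(hdiam m mn); field.
  by rewrite h2 h1.
have := hsum n.+1 (leqnn _).
rewrite hen mul0r add0r hd0 divr1.
have -> : e 0%N = c i (i + 2) by rewrite /e addr0.
move=> ->.
apply: le_trans (ler_norm_sum _ _ _) _.
destruct n as [|n']; first by [].
rewrite big_nat_recr // big_nat_recl //=.
have hM2 : M ^+ 2 != 0 by rewrite expf_neq0 // gt_eqF.
have -> : (n'.+1%:R - 1 + 2 * M) / M ^+ 2 =
   1 / (1 * M) + \sum_(0 <= k < n') (1 / (M * M)) + 1 / (M * 1).
  rewrite sumr_const_nat subn0 -[_ *+ n']mulr_natr -addn1 natrD.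
  field; by rewrite gt_eqF.
apply: lerD; first apply: lerD.
- rewrite /t; apply: inv_bound => //; first by rewrite hd0 normr1.
  by case: (hdS 1%N) => //; rewrite ltnS.
- rewrite big_nat_cond [X in _ <= X]big_nat_cond.
  apply: ler_sum => k /andP [/andP [_ kn] _].
  rewrite /t; apply: inv_bound => //.
    by case: (hdS k.+1) => //; rewrite ltnS ltnW.
  by case: (hdS k.+2).
- rewrite /t; apply: inv_bound => //; last by rewrite hdn normr1.
  by case: (hdS n'.+1).
Qed.
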